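(* Let $P(z)=z^2$ and let $K>1$. There exists $\theta_0=\theta_0(K)>0$ such that for all $\theta\in(0,\theta_0)$ the boundaries of $P(D((-1,1);\theta))$ and of $D((-K,1);\theta)$ intersect each other exactly in a point $Z(K,\theta)$ of the upper half-plane and its complex conjugate. Furthermore $Z(K,\theta)\to K^2$ as $\theta\to0$. Hence the difference $\Delta(K,\theta)=D((-K,1);\theta)\setminus P(D((-1,1);\theta))$ tends to the interval $[1,K^2]$ as $\theta\to0$.
   Context: For a bounded open real interval $J=(a,b)$ and $\theta\in(0,\pi/2]$, the Poincaré neighbourhood $D(J;\theta)$ is the union of $J$ with the set of $z\in\mathbb C\setminus\mathbb R$ from which $J$ is seen under an angle greater than $\theta$ (i.e. the angle at $z$ between the segments $[z,a]$ and $[z,b]$ exceeds $\theta$); equivalently, it is the union of the two open Euclidean discs, symmetric with respect to $\mathbb R$, whose boundary circles pass through $a$ and $b$ and meet the real line at angle $\theta$. For $\theta=\pi/2$ it is the Euclidean disc with diameter $J$. *)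

(* Defs.v *)
From Stdlib Require Import Reals.
From Coquelicot Require Import Coquelicot.
Open Scope R_scope.

Definition angle_at (z : C) (a b : R) : R :=
  let u := Cminus (RtoC a) z in
  let v := Cminus (RtoC b) z in
  acos (Re (Cmult u (Cconj v)) / (Cmod u * Cmod v)).

Definition poincare_nbhd (a b theta : R) (z : C) : Prop :=
  (Im z = 0 /\ a < Re z < b) \/ (Im z <> 0 /\ theta < angle_at z a b).

Definition Psq (z : C) : C := Cmult z z.

Definition image_set (f : C -> C) (S : C -> Prop) (w : C) : Prop :=
  exists z, S z /\ w = f z.

Definition boundary (S : C -> Prop) (w : C) : Prop :=
  forall eps, 0 < eps ->
    (exists u, Cmod (Cminus u w) < eps /\ S u) /\
    (exists u, Cmod (Cminus u w) < eps /\ ~ S u).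

Definition DeltaKT (K theta : R) (w : C) : Prop :=
  poincare_nbhd (- K) 1 theta w /\ ~ image_set Psq (poincare_nbhd (-1) 1 theta) w.

(* Main.v *)
Require Import Defs.
From Stdlib Require Import Reals Lra Psatz.
From Coquelicot Require Import Coquelicot.
Open Scope R_scope.

Lemma cmod_le (a b : R) : Cmod (a, b) <= Rabs a + Rabs b.
Proof.
  unfold Cmod; simpl.
  rewrite <- (sqrt_pow2 (Rabs a + Rabs b)) by (pose proof (Rabs_pos a); pose proof (Rabs_pos b); lra).
  apply sqrt_le_1_alt.
  pose proof (Rabs_pos a); pose proof (Rabs_pos b).
  assert (Rabs a * Rabs a = a*a) by (rewrite <- Rabs_mult; apply Rabs_right; nra).
  assert (Rabs b * Rabs b = b*b) by (rewrite <- Rabs_mult; apply Rabs_right; nra).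
  nra.
Qed.

Lemma cmod_fst (w : C) : Rabs (fst w) <= Cmod w.
Proof. pose proof (Rmax_Cmod w). pose proof (Rmax_l (Rabs (fst w)) (Rabs (snd w))). lra. Qed.
Lemma cmod_snd (w : C) : Rabs (snd w) <= Cmod w.
Proof. pose proof (Rmax_Cmod w). pose proof (Rmax_r (Rabs (fst w)) (Rabs (snd w))). lra. Qed.

Lemma Cminus_pair a b c d : Cminus (a, b) (c, d) = (a - c, b - d).
Proof. reflexivity. Qed.

Lemma cmod_sq (w : C) : Cmod w ^ 2 = fst w ^ 2 + snd w ^ 2.
Proof. unfold Cmod. rewrite pow2_sqrt; [ring|]. nra. Qed.

Lemma cmod_ge0 (w : C) : 0 <= Cmod w.
Proof. unfold Cmod; apply sqrt_pos. Qed.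

Definition Qf (a b : R) (z : C) := (fst z - a) * (fst z - b) + snd z ^ 2.

Lemma acos_lt_iff (c th : R) : -1 <= c <= 1 -> 0 <= th <= PI ->
  (th < acos c <-> c < cos th).
Proof.
  intros Hc Hth. pose proof (acos_bound c) as Hb. split; intro H.
  - rewrite <- (cos_acos c Hc). apply cos_decreasing_1; lra.
  - destruct (Rlt_or_le th (acos c)) as [h|h]; auto.
    exfalso. destruct (Rle_lt_or_eq_dec _ _ h) as [h'|h'].
    + pose proof (cos_decreasing_1 (acos c) th ltac:(lra) ltac:(lra) ltac:(lra) ltac:(lra) h').
      rewrite cos_acos in H0; [lra|lra].
    + rewrite <- h' in H. rewrite cos_acos in H; lra.
Qed.

Lemma nbhd_iff (a b th : R) (z : C) : a < b -> 0 < th < PI / 2 ->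
  poincare_nbhd a b th z <-> Qf a b z < (b - a) * (cos th / sin th) * Rabs (snd z).
Proof.
  intros Hab Hth. destruct z as [x y]. unfold poincare_nbhd, Qf, angle_at; simpl.
  assert (Hs : 0 < sin th) by (apply sin_gt_0; lra).
  assert (Hc : 0 < cos th) by (apply cos_gt_0; lra).
  assert (Hsc : sin th ^ 2 + cos th ^ 2 = 1) by (rewrite <- (sin2_cos2 th); unfold Rsqr; ring).
  destruct (Req_dec y 0) as [Hy|Hy].
  - subst y. rewrite Rabs_R0. split.
    + intros [[_ H]|[H _]]; [nra | lra].
    + intro H. left. split; [reflexivity|]. nra.
  -
    replace ((a + - x) * (b + - x) - (0 + - y) * - (0 + - y)) with ((x - a) * (x - b) + y ^ 2) by ring.
    replace (y * (y * 1)) with (y ^ 2) by ring.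
    set (Q := (x - a) * (x - b) + y ^ 2).
    set (M := Cmod (Cminus (RtoC a) (x, y)) * Cmod (Cminus (RtoC b) (x, y))).
    assert (HM2 : M ^ 2 = Q ^ 2 + y ^ 2 * (b - a) ^ 2).
    { unfold M. rewrite Rpow_mult_distr, !cmod_sq. simpl. unfold Q. ring. }
    assert (Hy2 : 0 < y ^ 2) by (pose proof (Rsqr_pos_lt y Hy); unfold Rsqr in *; nra).
    assert (Hba : 0 < (b - a) ^ 2) by nra.
    assert (HM : 0 < M).
    { assert (M >= 0) by (unfold M; pose proof (cmod_ge0 (Cminus (RtoC a) (x, y)));
        pose proof (cmod_ge0 (Cminus (RtoC b) (x, y))); nra).
      destruct (Req_dec M 0) as [E|E]; [|lra]. rewrite E in HM2. nra. }
    assert (HQM : Q < M /\ - M < Q) by (split; nra).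
    assert (Hcb : -1 <= Q / M <= 1).
    { split; [apply (Rmult_le_reg_r M); [lra|]; unfold Rdiv; rewrite Rmult_assoc, Rinv_l; lra
             |apply (Rmult_le_reg_r M); [lra|]; unfold Rdiv; rewrite Rmult_assoc, Rinv_l; lra]. }
    assert (Hy' : 0 < Rabs y) by (apply Rabs_pos_lt; auto).
    assert (Hyy : Rabs y ^ 2 = y ^ 2) by (replace (Rabs y ^2) with (Rabs y * Rabs y) by ring; rewrite <- Rabs_mult; rewrite Rabs_right; [ring|nra]).
    assert (key : Q / M < cos th <-> Q < (b - a) * (cos th / sin th) * Rabs y).
    { assert (E1 : Q / M < cos th <-> Q < M * cos th).
      { split; intro h.
        - apply (Rmult_lt_compat_r M) in h; [|lra]. unfold Rdiv in h.
          rewrite Rmult_assoc, Rinv_l in h; lra.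
        - apply (Rmult_lt_reg_r M); [lra|]. unfold Rdiv. rewrite Rmult_assoc, Rinv_l; lra. }
      assert (E2 : Q < (b - a) * (cos th / sin th) * Rabs y <-> Q * sin th < (b - a) * cos th * Rabs y).
      { split; intro h.
        - apply (Rmult_lt_compat_r (sin th)) in h; [|lra].
          replace ((b - a) * (cos th / sin th) * Rabs y * sin th) with ((b - a) * cos th * Rabs y) in h
            by (field; lra). lra.
        - apply (Rmult_lt_reg_r (sin th)); [lra|].
          replace ((b - a) * (cos th / sin th) * Rabs y * sin th) with ((b - a) * cos th * Rabs y)
            by (field; lra). lra. }
      rewrite E1, E2.
      assert (HA : 0 < (b - a) * cos th * Rabs y) by (apply Rmult_lt_0_compat; [nra|lra]).
      destruct (Rle_or_lt Q 0) as [HQ|HQ].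
      - split; intros _; nra.
      - assert (Hsq : ((b - a) * cos th * Rabs y) ^ 2 = y ^ 2 * (b - a) ^ 2 * cos th ^ 2)
          by (rewrite <- Hyy; ring).
        split; intro h.
        + assert (0 < Q * sin th) by (apply Rmult_lt_0_compat; lra).
          assert (H1 : Q ^ 2 < (M * cos th) ^ 2) by nra.
          assert ((Q * sin th) ^ 2 < ((b - a) * cos th * Rabs y) ^ 2).
          { rewrite Hsq. replace ((Q * sin th) ^ 2) with (Q ^ 2 * (1 - cos th ^ 2)) by (rewrite <- Hsc; ring).
            replace ((M * cos th)^2) with (M^2 * cos th ^2) in H1 by ring. rewrite HM2 in H1. nra. }
          nra.
        + assert (0 < Q * sin th) by (apply Rmult_lt_0_compat; lra).
          assert (H1 : (Q * sin th) ^ 2 < ((b - a) * cos th * Rabs y) ^ 2) by nra.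
          assert (Q ^ 2 < (M * cos th) ^ 2).
          { replace ((M * cos th)^2) with (M^2 * cos th ^2) by ring. rewrite HM2.
            rewrite Hsq in H1. replace ((Q * sin th) ^ 2) with (Q ^ 2 * (1 - cos th ^ 2)) in H1 by (rewrite <- Hsc; ring).
            nra. }
          assert (0 < M * cos th) by (apply Rmult_lt_0_compat; lra).
          nra. }
    rewrite <- key. rewrite <- (acos_lt_iff (Q / M) th Hcb) by (pose proof PI_RGT_0; lra).
    split.
    + intros [[H _]|[_ H]]; [lra|exact H].
    + intro H; right; split; auto.
Qed.

Definition cot (th : R) := cos th / sin th.
Definition Phi1 (t : R) (w : C) := Cmod w - 1 - 2 * t * sqrt ((Cmod w - fst w) / 2).
Definition Phi2 (K t : R) (w : C) :=
  (fst w + K) * (fst w - 1) + snd w ^ 2 - (1 + K) * t * Rabs (snd w).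

Lemma D1_iff th z : 0 < th < PI / 2 ->
  poincare_nbhd (-1) 1 th z <-> fst z ^ 2 + snd z ^ 2 - 1 - 2 * cot th * Rabs (snd z) < 0.
Proof.
  intro H. rewrite nbhd_iff by lra. unfold Qf, cot.
  split; intro h; nra.
Qed.

Lemma D2_iff K th w : 1 < K -> 0 < th < PI / 2 ->
  poincare_nbhd (-K) 1 th w <-> Phi2 K (cot th) w < 0.
Proof.
  intros HK H. rewrite nbhd_iff by lra. unfold Qf, cot, Phi2.
  split; intro h; nra.
Qed.

Lemma Psq_pair p q : Psq (p, q) = (p * p - q * q, p * q + q * p).
Proof. reflexivity. Qed.

Lemma rabs_sq (a : R) : Rabs a * Rabs a = a * a.
Proof. rewrite <- Rabs_mult. apply Rabs_right. nra. Qed.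

Lemma Phi1_sq t p q : Phi1 t (Psq (p, q)) = p ^ 2 + q ^ 2 - 1 - 2 * t * Rabs q.
Proof.
  rewrite Psq_pair. unfold Phi1, Cmod; simpl.
  replace ((p * p - q * q) * ((p * p - q * q) * 1) + (p * q + q * p) * ((p * q + q * p) * 1))
    with ((p * p + q * q) ^ 2) by ring.
  rewrite sqrt_pow2 by nra.
  replace ((p * p + q * q - (p * p - q * q)) / 2) with (q * q) by field.
  replace (q*q) with (Rsqr q) by reflexivity. rewrite sqrt_Rsqr_abs. unfold Rsqr. ring.
Qed.

Lemma Phi2_sq K t p q : Phi2 K t (Psq (p, q)) =
  (p ^ 2 + q ^ 2) ^ 2 + (K - 1) * (p ^ 2 - q ^ 2) - K - (1 + K) * t * (2 * Rabs p * Rabs q).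
Proof.
  rewrite Psq_pair. unfold Phi2; simpl.
  replace (p * q + q * p) with (2 * (p * q)) by ring.
  rewrite Rabs_mult, Rabs_mult, (Rabs_right 2) by lra. ring.
Qed.

Lemma sqrt_ex (w : C) : exists z, Psq z = w.
Proof.
  destruct w as [X Y].
  set (r := Cmod (X, Y)).
  assert (Hr : r ^ 2 = X ^ 2 + Y ^ 2) by (unfold r; rewrite cmod_sq; reflexivity).
  assert (HX : Rabs X <= r) by (apply (cmod_fst (X, Y))).
  assert (H1 : 0 <= (r + X) / 2) by (pose proof (Rabs_le_between' X 0 r); unfold Rabs in HX; destruct (Rcase_abs X); lra).
  assert (H2 : 0 <= (r - X) / 2) by (unfold Rabs in HX; destruct (Rcase_abs X); lra).
  set (s := sqrt ((r + X) / 2)). set (y := sqrt ((r - X) / 2)).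
  assert (Hs : s * s = (r + X) / 2) by (apply sqrt_sqrt; auto).
  assert (Hy : y * y = (r - X) / 2) by (apply sqrt_sqrt; auto).
  assert (Hsy : s * y = Rabs Y / 2).
  { unfold s, y. rewrite <- sqrt_mult by auto.
    replace ((r + X) / 2 * ((r - X) / 2)) with (Rsqr (Rabs Y / 2)).
    - apply sqrt_Rsqr. pose proof (Rabs_pos Y); lra.
    - unfold Rsqr. pose proof (rabs_sq Y). field_simplify. nra. }
  destruct (Rle_or_lt 0 Y) as [HY|HY].
  - exists (s, y). rewrite Psq_pair. rewrite Rabs_right in Hsy by lra. f_equal; nra.
  - exists (s, - y). rewrite Psq_pair. rewrite Rabs_left in Hsy by lra. f_equal; nra.
Qed.

Lemma img_iff th w : 0 < th < PI / 2 ->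
  image_set Psq (poincare_nbhd (-1) 1 th) w <-> Phi1 (cot th) w < 0.
Proof.
  intro Hth. split.
  - intros [[p q] [Hz ->]]. rewrite D1_iff in Hz by auto. rewrite Phi1_sq. simpl in Hz. lra.
  - intro H. destruct (sqrt_ex w) as [[p q] Hz]. exists (p, q). split; auto.
    rewrite D1_iff by auto. rewrite <- Hz, Phi1_sq in H. simpl. lra.
Qed.

Lemma cont_eps (f : C -> R) (w : C) : continuous f w ->
  forall e, 0 < e -> exists d, 0 < d /\ forall u, Cmod (Cminus u w) < d -> Rabs (f u - f w) < e.
Proof.
  intros Hc e He.
  assert (Hl := Hc _ (locally_ball (f w) (mkposreal e He))).
  destruct Hl as [d Hd].
  exists d. split; [apply cond_pos|].
  intros u Hu. specialize (Hd u).
  destruct u as [u1 u2], w as [w1 w2].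
  rewrite Cminus_pair in Hu.
  pose proof (cmod_fst (u1 - w1, u2 - w2)). pose proof (cmod_snd (u1 - w1, u2 - w2)). cbn [fst snd] in *.
  assert (B : ball (w1, w2) d (u1, u2)).
  { split; simpl; unfold ball; simpl; unfold AbsRing_ball, abs, minus, plus, opp; simpl. all: unfold Rminus in *; lra. }
  specialize (Hd B). unfold ball in Hd; simpl in Hd. unfold AbsRing_ball, abs, minus, plus, opp in Hd; simpl in Hd.
  exact Hd.
Qed.

Lemma cR_fst (w : C) : continuous (fun u : C => fst u) w.
Proof. destruct w as [a b]. apply (@continuous_fst R_UniformSpace R_UniformSpace a b). Qed.
Lemma cR_snd (w : C) : continuous (fun u : C => snd u) w.
Proof. destruct w as [a b]. apply (@continuous_snd R_UniformSpace R_UniformSpace a b). Qed.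
Lemma cR_const (c : R) (w : C) : continuous (fun _ : C => c) w.
Proof. apply continuous_const. Qed.
Lemma cR_plus (f g : C -> R) w : continuous f w -> continuous g w -> continuous (fun u => f u + g u) w.
Proof. intros. apply (@continuous_plus C_UniformSpace R_AbsRing R_NormedModule f g w); auto. Qed.
Lemma cR_mult (f g : C -> R) w : continuous f w -> continuous g w -> continuous (fun u => f u * g u) w.
Proof. intros. apply (@continuous_mult C_UniformSpace R_AbsRing f g w); auto. Qed.
Lemma cR_minus (f g : C -> R) w : continuous f w -> continuous g w -> continuous (fun u => f u - g u) w.
Proof.
  intros. assert (E : forall u, f u + (-1) * g u = f u - g u) by (intro; ring). apply (continuous_ext _ _ w E).
  apply cR_plus; auto. apply cR_mult; auto. apply cR_const.
Qed.
Lemma cR_sqrt (f : C -> R) w : continuous f w -> continuous (fun u => sqrt (f u)) w.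
Proof. intros. apply (continuous_comp f sqrt); auto. apply continuous_sqrt. Qed.
Lemma cR_abs (f : C -> R) w : continuous f w -> continuous (fun u => Rabs (f u)) w.
Proof. intros. apply (continuous_comp f Rabs); auto. apply continuous_Rabs. Qed.
Lemma cR_cmod w : continuous (fun u : C => Cmod u) w.
Proof.
  unfold Cmod. apply cR_sqrt. assert (E : forall u : C, fst u * fst u + snd u * snd u = fst u ^ 2 + snd u ^ 2) by (intro; ring). apply (continuous_ext _ _ w E).
  apply cR_plus; apply cR_mult; (apply cR_fst || apply cR_snd).
Qed.

Lemma cont_Phi1 t w : continuous (Phi1 t) w.
Proof.
  unfold Phi1. apply cR_minus. apply cR_minus. apply cR_cmod. apply cR_const.
  apply cR_mult. apply cR_const. apply cR_sqrt.
  apply (continuous_ext (fun u => (Cmod u - fst u) * / 2) (fun u => (Cmod u - fst u) / 2) w (fun u => eq_refl)).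
  apply cR_mult. apply cR_minus. apply cR_cmod. apply cR_fst. apply cR_const.
Qed.

Lemma cont_Phi2 K t w : continuous (Phi2 K t) w.
Proof.
  unfold Phi2. apply cR_minus. apply cR_plus. apply cR_mult.
  apply cR_plus. apply cR_fst. apply cR_const. apply cR_minus. apply cR_fst. apply cR_const.
  assert (E : forall u : C, snd u * snd u = snd u ^ 2) by (intro; ring). apply (continuous_ext _ _ w E).
  apply cR_mult; apply cR_snd.
  apply cR_mult. apply cR_const. apply cR_abs. apply cR_snd.
Qed.

Lemma bnd_zero (f : C -> R) (S : C -> Prop) w :
  (forall u, S u <-> f u < 0) -> continuous f w -> boundary S w -> f w = 0.
Proof.
  intros HS Hc Hb.
  destruct (Rtotal_order (f w) 0) as [h|[h|h]]; auto; exfalso.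
  - destruct (cont_eps f w Hc (- f w) ltac:(lra)) as [d [Hd Hu]].
    destruct (Hb d Hd) as [_ [u [Hu1 Hu2]]]. apply Hu2, HS.
    specialize (Hu u Hu1). apply Rabs_def2 in Hu. lra.
  - destruct (cont_eps f w Hc (f w) ltac:(lra)) as [d [Hd Hu]].
    destruct (Hb d Hd) as [[u [Hu1 Hu2]] _]. apply HS in Hu2.
    specialize (Hu u Hu1). apply Rabs_def2 in Hu. lra.
Qed.

Lemma bnd_intro (S : C -> Prop) w :
  (forall e, 0 < e -> exists u v, Cmod (Cminus u w) < e /\ S u /\ Cmod (Cminus v w) < e /\ ~ S v) ->
  boundary S w.
Proof.
  intros H e He. destruct (H e He) as [u [v [? [? [? ?]]]]]. split; eauto.
Qed.

Definition rho (K t : R) := (4 * t ^ 2 * K ^ 2 + (K - 1) ^ 2) / (4 * t ^ 2 + (K - 1) ^ 2).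
Definition sZ (K t : R) := (rho K t - K) / (K - 1).
Definition yZ (K t : R) := (rho K t - 1) / (2 * t).
Definition Zt (K t : R) : C := Psq (sZ K t, yZ K t).

Section Alg.
Variables (K t : R).
Hypothesis HK : 1 < K.
Hypothesis Ht : 2 * K <= t.

Lemma t_pos : 0 < t. Proof. lra. Qed.

Lemma rho_eq : rho K t * (4 * t ^ 2 + (K - 1) ^ 2) = 4 * t ^ 2 * K ^ 2 + (K - 1) ^ 2.
Proof. unfold rho. field. nra. Qed.

Lemma rho_bounds : K < rho K t < K ^ 2.
Proof.
  pose proof rho_eq. assert (0 < 4 * t ^ 2 + (K - 1) ^ 2) by nra.
  assert (h1 : (K - 1) ^ 2 < 4 * t ^ 2 * K) by nra.
  split; apply (Rmult_lt_reg_r (4 * t ^ 2 + (K - 1) ^ 2)); try lra; rewrite H.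
  - assert (0 < (K - 1) * (4 * t ^ 2 * K - (K - 1) ^ 2)) by (apply Rmult_lt_0_compat; lra). nra.
  - assert (0 < (K - 1) ^ 2 * (K ^ 2 - 1)) by (apply Rmult_lt_0_compat; nra). nra.
Qed.

Lemma sZ_bounds : 0 < sZ K t < K.
Proof.
  pose proof rho_bounds. unfold sZ.
  split.
  - apply Rdiv_lt_0_compat; lra.
  - apply (Rmult_lt_reg_r (K - 1)); [lra|]. unfold Rdiv. rewrite Rmult_assoc, Rinv_l by lra. nra.
Qed.

Lemma sZ_eq : (K - 1) * sZ K t = rho K t - K.
Proof. unfold sZ. field. lra. Qed.

Lemma yZ_eq : 2 * t * yZ K t = rho K t - 1.
Proof. unfold yZ. field. lra. Qed.

Lemma yZ_pos : 0 < yZ K t.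
Proof. pose proof rho_bounds. pose proof yZ_eq. nra. Qed.

Lemma yZ_small : yZ K t * (2 * t) <= K ^ 2.
Proof. pose proof rho_bounds. pose proof yZ_eq. nra. Qed.

Lemma sy_rho : sZ K t ^ 2 + yZ K t ^ 2 = rho K t.
Proof.
  pose proof rho_eq as E. pose proof sZ_eq as E1. pose proof yZ_eq as E2.
  assert (0 < 4 * t ^ 2 + (K - 1) ^ 2) by nra.
  assert (Hs : sZ K t = (rho K t - K) / (K - 1)) by (unfold sZ; reflexivity).
  assert (Hy : yZ K t = (rho K t - 1) / (2 * t)) by (unfold yZ; reflexivity).
  rewrite Hs, Hy. set (r := rho K t) in *.
  assert (r = (4 * t ^ 2 * K ^ 2 + (K - 1) ^ 2) / (4 * t ^ 2 + (K - 1) ^ 2)) by (unfold r, rho; reflexivity).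
  rewrite H0. field. split; [lra|]. split; [lra|]. nra.
Qed.

Lemma classify p q :
  Phi1 t (Psq (p, q)) = 0 -> Phi2 K t (Psq (p, q)) = 0 ->
  Psq (p, q) = RtoC 1 \/ Psq (p, q) = Zt K t \/ Psq (p, q) = Cconj (Zt K t).
Proof.
  rewrite Phi1_sq, Phi2_sq. intros E1 E2.
  set (s := Rabs p). set (y := Rabs q).
  assert (Hp : p ^ 2 = s ^ 2) by (unfold s; pose proof (rabs_sq p); nra).
  assert (Hq : q ^ 2 = y ^ 2) by (unfold y; pose proof (rabs_sq q); nra).
  assert (Hs0 : 0 <= s) by apply Rabs_pos. assert (Hy0 : 0 <= y) by apply Rabs_pos.
  rewrite Hp, Hq in E1, E2. fold s y in E1, E2.
  set (r := s ^ 2 + y ^ 2) in *.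
  assert (E3 : 2 * t * y = r - 1) by lra.
  assert (E4 : (2 * s - r - 1) * ((K - 1) * s - r + K) = 0).
  { replace ((1 + K) * t * (2 * s * y)) with ((1 + K) * s * (r - 1)) in E2 by (rewrite <- E3; ring).
    unfold r in *. rewrite <- E2. ring. }
  apply Rmult_integral in E4. destruct E4 as [E4|E4].
  - left. assert (Hs1 : s = 1) by (unfold r in E4; nra). assert (Hy1 : y = 0) by (unfold r in E4; nra).
    rewrite Psq_pair. unfold RtoC. f_equal.
    + nra.
    + assert (q = 0) by (unfold y in Hy1; destruct (Req_dec q 0); auto; apply Rabs_no_R0 in H; contradiction).
      subst q; ring.
  - assert (Hr1 : r <> 1).
    { intro Hr. assert (y = 0) by (pose proof t_pos; nra). unfold r in Hr. assert (s = 1) by nra. nra. }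
    assert (Hr : r * (4 * t ^ 2 + (K - 1) ^ 2) = 4 * t ^ 2 * K ^ 2 + (K - 1) ^ 2).
    { assert (A : (r - 1) * ((r - 1) * (K - 1) ^ 2 + 4 * t ^ 2 * (r - K ^ 2)) = 0).
      { assert (Ks : (K - 1) * s = r - K) by lra.
        assert (H4 : 4 * t ^ 2 * y ^ 2 = (r - 1) ^ 2) by (rewrite <- E3; ring).
        assert (H5 : (K - 1) ^ 2 * y ^ 2 = - (r - 1) * (r - K ^ 2)).
        { replace (y ^ 2) with (r - s ^ 2) by (unfold r; ring).
          replace ((K - 1) ^ 2 * (r - s ^ 2)) with ((K - 1) ^ 2 * r - ((K - 1) * s) ^ 2) by ring.
          rewrite Ks. ring. }
        replace ((r - 1) * ((r - 1) * (K - 1) ^ 2 + 4 * t ^ 2 * (r - K ^ 2)))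
          with ((K - 1) ^ 2 * ((r - 1) ^ 2) + 4 * t ^ 2 * ((r - 1) * (r - K ^ 2))) by ring.
        rewrite <- H4. replace ((r - 1) * (r - K ^ 2)) with (- ((K - 1) ^ 2 * y ^ 2)) by lra. ring. }
      apply Rmult_integral in A. destruct A as [A|A]; [exfalso; apply Hr1; lra|]. lra. }
    assert (Hrr : r = rho K t).
    { pose proof rho_eq. assert (0 < 4 * t ^ 2 + (K - 1) ^ 2) by nra.
      apply (Rmult_eq_reg_r (4 * t ^ 2 + (K - 1) ^ 2)); lra. }
    assert (Hss : s = sZ K t). { pose proof sZ_eq. apply (Rmult_eq_reg_l (K - 1)); lra. }
    assert (Hyy : y = yZ K t). { pose proof yZ_eq. pose proof t_pos. apply (Rmult_eq_reg_l (2 * t)); lra. }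
    unfold Zt, Cconj. rewrite !Psq_pair. simpl.
    assert (Hpq : p * q + q * p = 2 * s * y \/ p * q + q * p = - (2 * s * y)).
    { unfold s, y. replace (2 * Rabs p * Rabs q) with (2 * (Rabs p * Rabs q)) by ring. rewrite <- Rabs_mult.
      destruct (Rle_or_lt 0 (p * q)) as [h|h]; [left; rewrite Rabs_right by lra; ring
                                             | right; rewrite Rabs_left by lra; ring]. }
    rewrite <- Hss, <- Hyy.
    destruct Hpq as [h|h]; [right; left|right; right]; rewrite h; f_equal; try nra; ring.
Qed.

End Alg.

Lemma small_pos (a b c d : R) : 0 < a -> 0 < b -> 0 < c -> 0 < d ->
  exists x, 0 < x /\ x <= a /\ x <= b /\ x <= c /\ x <= d.
Proof.
  intros. exists (Rmin (Rmin a b) (Rmin c d)).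
  repeat split;
  repeat (apply Rmin_glb_lt || apply Rmin_pos); auto;
  unfold Rmin; repeat destruct Rle_dec; lra.
Qed.

Lemma rabs_sigma (sg a : R) : Rabs sg = 1 -> Rabs (sg * a) = Rabs a.
Proof. intro H. rewrite Rabs_mult, H. ring. Qed.

Lemma bnd_P1_one t : 0 < t -> boundary (fun w => Phi1 t w < 0) (RtoC 1).
Proof.
  intro Ht. apply bnd_intro. intros e He.
  destruct (small_pos (e / 4) 1 1 1) as [d [Hd [Hd1 [Hd2 _]]]]; try lra.
  exists (Psq (1 - d, 0)), (Psq (1 + d, 0)). unfold RtoC. rewrite !Phi1_sq, !Psq_pair, !Cminus_pair.
  rewrite Rabs_R0.
  repeat split.
  - eapply Rle_lt_trans; [apply cmod_le|].
    replace ((1 - d) * (1 - d) - 0 * 0 - 1) with (- (d * (2 - d))) by ring.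
    replace ((1 - d) * 0 + 0 * (1 - d) - 0) with 0 by ring.
    rewrite Rabs_R0, Rabs_Ropp. rewrite Rabs_right by nra. nra.
  - nra.
  - eapply Rle_lt_trans; [apply cmod_le|].
    replace ((1 + d) * (1 + d) - 0 * 0 - 1) with (d * (2 + d)) by ring.
    replace ((1 + d) * 0 + 0 * (1 + d) - 0) with 0 by ring.
    rewrite Rabs_R0, Rabs_right by nra. nra.
  - nra.
Qed.

Lemma bnd_P1_Z t s y sg : 0 < t -> 0 <= s -> 0 < y < t -> Rabs sg = 1 ->
  s ^ 2 + y ^ 2 - 1 = 2 * t * y ->
  boundary (fun w => Phi1 t w < 0) (Psq (s, sg * y)).
Proof.
  intros Ht Hs Hy Hsg E. apply bnd_intro. intros e He.
  destruct (small_pos (y / 2) ((t - y) / 2) (e / (2 * y + 2 * s + 2)) 1) as [d [Hd [Hd1 [Hd2 [Hd3 Hd4]]]]];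
    try lra; try (apply Rdiv_lt_0_compat; lra).
  assert (Hd2' : d * (2 * y + 2 * s + 2) <= e).
  { apply (Rmult_le_compat_r (2 * y + 2 * s + 2)) in Hd3; [|lra].
    replace (e / (2 * y + 2 * s + 2) * (2 * y + 2 * s + 2)) with e in Hd3 by (field; lra). lra. }
  assert (Hsg2 : sg * sg = 1) by (pose proof (rabs_sq sg); rewrite Hsg in H; lra).
  assert (Hsgc : sg = 1 \/ sg = -1).
  { destruct (Rle_or_lt 0 sg); [left; rewrite Rabs_right in Hsg by lra | right; rewrite Rabs_left in Hsg by lra]; lra. }
  exists (Psq (s, sg * (y + d))), (Psq (s, sg * (y - d))).
  rewrite !Phi1_sq, !Psq_pair, !Cminus_pair, !rabs_sigma by auto.
  rewrite (Rabs_right (y + d)) by lra. rewrite (Rabs_right (y - d)) by lra.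
  repeat split.
  - eapply Rle_lt_trans; [apply cmod_le|].
    replace (s * s - sg * (y + d) * (sg * (y + d)) - (s * s - sg * y * (sg * y))) with (- (d * (2 * y + d)))
      by (destruct Hsgc as [-> | ->]; ring).
    replace (s * (sg * (y + d)) + sg * (y + d) * s - (s * (sg * y) + sg * y * s)) with (sg * (2 * s * d)) by ring.
    rewrite (rabs_sigma sg) by auto. rewrite Rabs_Ropp, !Rabs_right by nra. nra.
  - replace ((sg * (y + d)) ^ 2) with ((y + d) ^ 2) by (destruct Hsgc as [-> | ->]; ring). nra.
  - eapply Rle_lt_trans; [apply cmod_le|].
    replace (s * s - sg * (y - d) * (sg * (y - d)) - (s * s - sg * y * (sg * y))) with (d * (2 * y - d))
      by (destruct Hsgc as [-> | ->]; ring).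
    replace (s * (sg * (y - d)) + sg * (y - d) * s - (s * (sg * y) + sg * y * s)) with (- (sg * (2 * s * d))) by ring.
    rewrite Rabs_Ropp. rewrite (rabs_sigma sg) by auto. rewrite !Rabs_right by nra. nra.
  - replace ((sg * (y - d)) ^ 2) with ((y - d) ^ 2) by (destruct Hsgc as [-> | ->]; ring). nra.
Qed.

Lemma bnd_P2_one K t : 1 < K -> 0 < t -> boundary (fun w => Phi2 K t w < 0) (RtoC 1).
Proof.
  intros HK Ht. apply bnd_intro. intros e He.
  destruct (small_pos (e / 2) 1 1 1) as [d [Hd [Hd1 [Hd2 _]]]]; try lra.
  exists (1 - d, 0), (1 + d, 0). unfold RtoC, Phi2. rewrite !Cminus_pair. simpl.
  rewrite Rabs_R0.
  repeat split.
  - eapply Rle_lt_trans; [apply cmod_le|].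
    replace (1 - d - 1) with (- d) by ring. replace (0 - 0) with 0 by ring.
    rewrite Rabs_R0, Rabs_Ropp, Rabs_right by nra. nra.
  - nra.
  - eapply Rle_lt_trans; [apply cmod_le|].
    replace (1 + d - 1) with d by ring. replace (0 - 0) with 0 by ring.
    rewrite Rabs_R0, Rabs_right by nra. nra.
  - nra.
Qed.

Lemma bnd_P2_Z K t X Y sg : 1 < K -> 0 < t -> 0 < Y -> 2 * Y < (1 + K) * t -> Rabs sg = 1 ->
  Phi2 K t (X, Y) = 0 -> boundary (fun w => Phi2 K t w < 0) (X, sg * Y).
Proof.
  intros HK Ht HY HY2 Hsg E. apply bnd_intro. intros e He.
  destruct (small_pos (Y / 2) (((1 + K) * t - 2 * Y) / 2) (e / 2) 1) as [d [Hd [Hd1 [Hd2 [Hd3 Hd4]]]]];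
    try lra; try (apply Rdiv_lt_0_compat; lra).
  assert (Hsg2 : sg * sg = 1) by (pose proof (rabs_sq sg); rewrite Hsg in H; lra).
  unfold Phi2 in *. simpl in E.
  exists (X, sg * (Y + d)), (X, sg * (Y - d)). rewrite !Cminus_pair. simpl.
  rewrite !rabs_sigma by auto. rewrite Rabs_right in E by lra.
  rewrite (Rabs_right (Y + d)) by lra. rewrite (Rabs_right (Y - d)) by lra.
  repeat split.
  - eapply Rle_lt_trans; [apply cmod_le|].
    replace (X - X) with 0 by ring. replace (sg * (Y + d) - sg * Y) with (sg * d) by ring.
    rewrite Rabs_R0, (rabs_sigma sg), Rabs_right by (auto || lra). lra.
  - replace (sg * (Y + d) * (sg * (Y + d) * 1)) with ((sg * sg) * (Y + d) ^ 2) by ring. rewrite Hsg2. nra.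
  - eapply Rle_lt_trans; [apply cmod_le|].
    replace (X - X) with 0 by ring. replace (sg * (Y - d) - sg * Y) with (- (sg * d)) by ring.
    rewrite Rabs_R0, Rabs_Ropp, (rabs_sigma sg), Rabs_right by (auto || lra). lra.
  - replace (sg * (Y - d) * (sg * (Y - d) * 1)) with ((sg * sg) * (Y - d) ^ 2) by ring. rewrite Hsg2. nra.
Qed.

Lemma cot_lb th : 0 < th <= 1 -> / (2 * th) <= cot th /\ th < PI / 2.
Proof.
  intro H. pose proof PI2_1.
  assert (Hs : 0 < sin th) by (apply sin_gt_0; lra).
  assert (Hs2 : sin th < th) by (apply sin_lt_x; lra).
  assert (Hc : 1 / 2 <= cos th).
  { replace th with (2 * (th / 2)) by field. rewrite cos_2a_sin.
    assert (0 < sin (th / 2)) by (apply sin_gt_0; lra).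
    assert (sin (th / 2) < th / 2) by (apply sin_lt_x; lra). nra. }
  split; [|lra]. unfold cot.
  apply (Rmult_le_reg_r (2 * th * sin th)). { apply Rmult_lt_0_compat; lra. }
  replace (/ (2 * th) * (2 * th * sin th)) with (sin th) by (field; lra).
  replace (cos th / sin th * (2 * th * sin th)) with (2 * th * cos th) by (field; lra).
  nra.
Qed.

Lemma boundary_ext (S S' : C -> Prop) w : (forall u, S u <-> S' u) -> boundary S' w -> boundary S w.
Proof.
  intros HS Hb e He. destruct (Hb e He) as [[u [? ?]] [v [? ?]]].
  split; [exists u | exists v]; rewrite HS; auto.
Qed.

Section Alg2.
Variables (K t : R).
Hypothesis HK : 1 < K.
Hypothesis Ht : 2 * K <= t.

Lemma yZ_lt : yZ K t <= K ^ 2 / (2 * t).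
Proof.
  pose proof (yZ_small K t HK Ht). apply (Rmult_le_reg_r (2 * t)); [lra|].
  replace (K ^ 2 / (2 * t) * (2 * t)) with (K ^ 2) by (field; lra). lra.
Qed.

Lemma yZ_lt_t : yZ K t < t.
Proof.
  pose proof yZ_lt. assert (K ^ 2 / (2 * t) < t); [|lra].
  apply (Rmult_lt_reg_r (2 * t)); [lra|].
  replace (K ^ 2 / (2 * t) * (2 * t)) with (K ^ 2) by (field; lra). nra.
Qed.

Lemma Phi1_Z : sZ K t ^ 2 + yZ K t ^ 2 - 1 = 2 * t * yZ K t.
Proof. rewrite (sy_rho K t HK Ht), (yZ_eq K t HK Ht). ring. Qed.

Lemma Phi2_Z : Phi2 K t (Zt K t) = 0.
Proof.
  unfold Zt. rewrite Phi2_sq.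
  pose proof (sZ_bounds K t HK Ht). pose proof (yZ_pos K t HK Ht).
  rewrite (Rabs_right (sZ K t)), (Rabs_right (yZ K t)) by lra.
  pose proof (sZ_eq K t HK). pose proof (yZ_eq K t HK Ht). pose proof (sy_rho K t HK Ht).
  set (s := sZ K t) in *. set (y := yZ K t) in *. set (r := rho K t) in *.
  replace ((1 + K) * t * (2 * s * y)) with ((1 + K) * s * (2 * t * y)) by ring.
  rewrite H2. assert (Hy2 : y ^ 2 = r - s ^ 2) by lra. rewrite Hy2.
  assert (Hr : r = (K - 1) * s + K) by lra. rewrite Hr. ring.
Qed.

Lemma ImZ_pos : 0 < snd (Zt K t).
Proof.
  unfold Zt. rewrite Psq_pair. simpl.
  pose proof (sZ_bounds K t HK Ht). pose proof (yZ_pos K t HK Ht). nra.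
Qed.

Lemma ImZ_small : 2 * snd (Zt K t) < (1 + K) * t.
Proof.
  unfold Zt. rewrite Psq_pair. simpl.
  pose proof (sZ_bounds K t HK Ht). pose proof (yZ_pos K t HK Ht). pose proof yZ_lt.
  assert (K ^ 2 / (2 * t) <= K / 4).
  { apply (Rmult_le_reg_r (2 * t)); [lra|].
    replace (K ^ 2 / (2 * t) * (2 * t)) with (K ^ 2) by (field; lra). nra. }
  nra.
Qed.

Definition CK := K * (K - 1) * (K ^ 2 - 1) / 2 + K ^ 3 / 8 + K ^ 3.

Lemma Zt_close : Cmod (Cminus (Zt K t) (RtoC (K ^ 2))) <= CK / t.
Proof.
  unfold Zt, RtoC. rewrite Psq_pair, Cminus_pair.
  eapply Rle_trans; [apply cmod_le|].
  pose proof (sZ_bounds K t HK Ht) as Hs. pose proof (yZ_pos K t HK Ht) as Hy. pose proof yZ_lt as Hy2.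
  pose proof (rho_eq K t HK Ht) as Er. pose proof (sZ_eq K t HK) as Es.
  pose proof (rho_bounds K t HK Ht) as Hr.
  set (s := sZ K t) in *. set (y := yZ K t) in *. set (r := rho K t) in *.
  assert (HKr : (K ^ 2 - r) * (4 * t ^ 2 + (K - 1) ^ 2) = (K - 1) ^ 2 * (K ^ 2 - 1)) by nra.
  assert (HKr2 : (K ^ 2 - r) * t <= (K - 1) ^ 2 * (K ^ 2 - 1) / 4).
  { assert (0 <= (K ^ 2 - r) * (K - 1) ^ 2) by (apply Rmult_le_pos; nra).
    assert (h : (K ^ 2 - r) * t * (4 * t) <= (K - 1) ^ 2 * (K ^ 2 - 1)) by nra.
    assert (0 <= (K ^ 2 - r) * t * (4 * t - 4)) by (apply Rmult_le_pos; [apply Rmult_le_pos|]; lra).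
    lra. }
  assert (HKs : (K - 1) * (K - s) = K ^ 2 - r) by nra.
  assert (HKs2 : (K - s) * t <= (K - 1) * (K ^ 2 - 1) / 4).
  { apply (Rmult_le_reg_l (K - 1)); [lra|]. nra. }
  assert (Hyt : y * t <= K ^ 2 / 2).
  { apply (Rmult_le_compat_r t) in Hy2; [|lra].
    replace (K ^ 2 / (2 * t) * t) with (K ^ 2 / 2) in Hy2 by (field; lra). lra. }
  assert (Hy1 : y <= K / 4).
  { assert (K ^ 2 / (2 * t) <= K / 4).
    { apply (Rmult_le_reg_r (2 * t)); [lra|].
      replace (K ^ 2 / (2 * t) * (2 * t)) with (K ^ 2) by (field; lra). nra. }
    nra. }
  apply (Rmult_le_reg_r t); [lra|].
  replace (CK / t * t) with CK by (field; lra). unfold CK.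
  rewrite (Rabs_left1 (s * s - y * y - K ^ 2)) by nra.
  rewrite (Rabs_right (s * y + y * s - 0)) by nra.
  assert (h1 : (K ^ 2 - s * s) * t <= 2 * K * ((K - s) * t)).
  { replace ((K ^ 2 - s * s) * t) with (((K - s) * t) * (K + s)) by ring.
    replace (2 * K * ((K - s) * t)) with (((K - s) * t) * (2 * K)) by ring.
    apply Rmult_le_compat_l; [apply Rmult_le_pos|]; lra. }
  assert (h2 : y * y * t <= K / 4 * (K ^ 2 / 2)).
  { replace (y * y * t) with (y * (y * t)) by ring. apply Rmult_le_compat; nra. }
  assert (h3 : 2 * s * y * t <= 2 * K * (K ^ 2 / 2)).
  { replace (2 * s * y * t) with (2 * s * (y * t)) by ring. apply Rmult_le_compat; nra. }
  nra.
Qed.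

End Alg2.

Lemma haus_a K t w y0 : 1 < K -> 0 < t -> K ^ 2 <= 2 * t * y0 ->
  Phi2 K t w < 0 -> 0 <= Phi1 t w ->
  exists x, 1 <= x <= K ^ 2 /\ Cmod (Cminus w (RtoC x)) <= 2 * y0 ^ 2 + 2 * K * y0.
Proof.
  intros HK Ht Hy0 H2 H1.
  destruct (sqrt_ex w) as [[p q] <-].
  rewrite Phi1_sq in H1. rewrite Phi2_sq in H2.
  set (s := Rabs p) in *. set (y := Rabs q) in *.
  assert (Hp : p ^ 2 = s ^ 2) by (unfold s; pose proof (rabs_sq p); nra).
  assert (Hq : q ^ 2 = y ^ 2) by (unfold y; pose proof (rabs_sq q); nra).
  assert (Hs0 : 0 <= s) by apply Rabs_pos. assert (Hyp : 0 <= y) by apply Rabs_pos.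
  rewrite Hp, Hq in H1, H2.
  set (r := s ^ 2 + y ^ 2) in *.
  assert (E3 : 2 * t * y <= r - 1) by lra.
  assert (E4 : (2 * s - r - 1) * ((K - 1) * s - r + K) < 0).
  { assert ((1 + K) * t * (2 * s * y) <= (1 + K) * s * (r - 1)).
    { replace ((1 + K) * t * (2 * s * y)) with (((1 + K) * s) * (2 * t * y)) by ring.
      apply Rmult_le_compat_l; [nra|lra]. }
    unfold r in *. nra. }
  assert (E5 : 0 < (K - 1) * s - r + K).
  { assert (Ef : 2 * s - r - 1 = - ((s - 1) ^ 2 + y ^ 2)) by (unfold r; ring).
    assert (2 * s - r - 1 <= 0) by (rewrite Ef; pose proof (pow2_ge_0 (s - 1)); pose proof (pow2_ge_0 y); lra).
    destruct (Rle_or_lt ((K - 1) * s - r + K) 0) as [h|h]; auto.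
    assert (0 <= (2 * s - r - 1) * ((K - 1) * s - r + K)) by nra.
    lra. }
  assert (HsK : s < K) by (unfold r in E5; nra).
  assert (HrK : r < K ^ 2) by nra.
  assert (Hy : y <= y0).
  { assert (2 * t * y < 2 * t * y0) by nra. nra. }
  assert (Hr1 : 1 <= r) by nra.
  exists (Rmax 1 (p * p - q * q)).
  rewrite Psq_pair. unfold RtoC. rewrite Cminus_pair. split.
  - split; [apply Rmax_l|]. apply Rmax_lub; [nra|]. nra.
  - eapply Rle_trans; [apply cmod_le|].
    assert (A1 : Rabs (p * p - q * q - Rmax 1 (p * p - q * q)) <= 2 * y0 ^ 2).
    { unfold Rmax. destruct (Rle_dec 1 (p * p - q * q)).
      - replace (p * p - q * q - (p * p - q * q)) with 0 by ring. rewrite Rabs_R0. nra.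
      - rewrite Rabs_left1 by lra. unfold r in Hr1. nra. }
    assert (A2 : Rabs (p * q + q * p - 0) <= 2 * K * y0).
    { replace (p * q + q * p - 0) with (2 * (p * q)) by ring.
      rewrite Rabs_mult, Rabs_mult, (Rabs_right 2) by lra. fold s y.
      assert (s * y <= K * y0) by (apply Rmult_le_compat; lra). lra. }
    lra.
Qed.

Lemma haus_b K t x a y0 : 1 < K -> 0 < t -> K ^ 2 <= 2 * t * y0 -> 1 <= x <= K ^ 2 ->
  0 < a -> a <= (K - 1) / 2 -> a <= 1 -> 0 <= y0 <= 1 ->
  (2 * K ^ 2 + K + 1) * y0 ^ 2 < 2 * a ^ 3 ->
  exists w, Phi2 K t w < 0 /\ 0 <= Phi1 t w /\
    Cmod (Cminus w (RtoC x)) <= (2 * K + 1) * a + y0 + 2 * K * y0.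
Proof.
  intros HK Ht Hy0 Hx Ha Ha1 Ha2 Hy01 Hsmall.
  set (r := sqrt x).
  assert (Hr2 : r * r = x) by (apply sqrt_sqrt; lra).
  assert (Hr1 : 1 <= r) by (unfold r; rewrite <- sqrt_1; apply sqrt_le_1_alt; lra).
  assert (HrK : r <= K).
  { unfold r. rewrite <- (sqrt_pow2 K) by lra. apply sqrt_le_1_alt; lra. }
  set (s := Rmax (1 + a) (Rmin (K - a) r)).
  assert (Hs : 1 + a <= s <= K - a).
  { unfold s. split; [apply Rmax_l|]. apply Rmax_lub; [lra|apply Rmin_l]. }
  assert (Hsx : Rabs (s * s - x) <= (2 * K + 1) * a).
  { unfold s, Rmax, Rmin. destruct (Rle_dec (K - a) r); destruct (Rle_dec (1 + a) _).
    - rewrite Rabs_left1 by nra. nra.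
    - lra.
    - rewrite <- Hr2. replace (r * r - r * r) with 0 by ring. rewrite Rabs_R0. nra.
    - rewrite Rabs_right by nra. nra. }
  set (y := (s ^ 2 - 1) / (2 * t)).
  assert (Ey : 2 * t * y = s ^ 2 - 1) by (unfold y; field; lra).
  assert (Hy0' : 0 <= y) by (unfold y; apply Rdiv_le_0_compat; nra).
  assert (Hyy : y <= y0).
  { assert (2 * t * y <= 2 * t * y0) by nra. nra. }
  exists (Psq (s, y)). rewrite Phi1_sq, Phi2_sq.
  rewrite (Rabs_right s) by lra. rewrite (Rabs_right y) by lra.
  repeat split.
  - replace ((1 + K) * t * (2 * s * y)) with ((1 + K) * s * (2 * t * y)) by ring. rewrite Ey.
    replace ((s ^ 2 + y ^ 2) ^ 2 + (K - 1) * (s ^ 2 - y ^ 2) - K - (1 + K) * s * (s ^ 2 - 1))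
      with (- (s - 1) ^ 2 * (K - s) * (s + 1) - y ^ 2 * (K - s) * (s + 1) + ((s - 1) ^ 2 + y ^ 2) * y ^ 2
            + (1 + K) * s * y ^ 2) by ring.
    assert (B1 : 2 * a ^ 3 <= (s - 1) ^ 2 * (K - s) * (s + 1)).
    { assert (a ^ 2 <= (s - 1) ^ 2) by nra.
      assert (a ^ 2 * a <= (s - 1) ^ 2 * (K - s)) by (apply Rmult_le_compat; nra).
      assert (a ^ 2 * a * 2 <= (s - 1) ^ 2 * (K - s) * (s + 1)) by (apply Rmult_le_compat; nra).
      nra. }
    assert (B2 : 0 <= y ^ 2 * (K - s) * (s + 1)) by (apply Rmult_le_pos; [apply Rmult_le_pos|]; nra).
    assert (B3 : ((s - 1) ^ 2 + y ^ 2) * y ^ 2 <= (K ^ 2 + 1) * y0 ^ 2).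
    { apply Rmult_le_compat; nra. }
    assert (B4 : (1 + K) * s * y ^ 2 <= (1 + K) * K * y0 ^ 2).
    { apply Rmult_le_compat; nra. }
    nra.
  - nra.
  - rewrite Psq_pair. unfold RtoC. rewrite Cminus_pair.
    eapply Rle_trans; [apply cmod_le|].
    replace (s * s - y * y - x) with ((s * s - x) - y * y) by ring.
    eapply Rle_trans; [apply Rplus_le_compat_r; apply Rabs_triang|].
    rewrite Rabs_Ropp. rewrite (Rabs_right (y * y)) by nra.
    replace (s * y + y * s - 0) with (2 * s * y) by ring. rewrite (Rabs_right (2 * s * y)) by nra.
    assert (y * y <= y0) by nra.
    assert (s * y <= K * y0) by (apply Rmult_le_compat; lra).
    lra.
Qed.

Lemma small_pos6 (a b c d e f : R) : 0 < a -> 0 < b -> 0 < c -> 0 < d -> 0 < e -> 0 < f ->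
  exists x, 0 < x /\ x <= a /\ x <= b /\ x <= c /\ x <= d /\ x <= e /\ x <= f.
Proof.
  intros. destruct (small_pos a b c d) as [x [? [? [? [? ?]]]]]; auto.
  destruct (small_pos x e f 1) as [z [? [? [? [? ?]]]]]; auto; try lra.
  exists z. repeat split; lra.
Qed.

Lemma th_facts K th : 1 < K -> 0 < th < / (4 * K) ->
  2 * K <= cot th /\ 0 < th < PI / 2 /\ 1 <= 2 * th * cot th.
Proof.
  intros HK H.
  assert (H4 : / (4 * K) < 1) by (rewrite <- Rinv_1; apply Rinv_lt_contravar; lra).
  destruct (cot_lb th ltac:(lra)) as [H1 H2].
  assert (Hth : th * (4 * K) < 1).
  { destruct H as [_ H]. apply (Rmult_lt_compat_r (4 * K)) in H; [|lra]. rewrite Rinv_l in H by lra. lra. }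
  assert (Hi : 1 <= 2 * th * cot th).
  { apply (Rmult_le_compat_l (2 * th)) in H1; [|lra]. rewrite Rinv_r in H1 by lra. lra. }
  repeat split; try lra.
  assert (2 * K * (2 * th) <= 1) by lra.
  assert (/ (2 * th) * (2 * th) = 1) by (field; lra).
  nra.
Qed.

Theorem mainTheorem6 (K : R) (HK : 1 < K) :
  exists theta0 : R, 0 < theta0 /\
  exists Z : R -> C,
    (forall theta, 0 < theta < theta0 ->
       0 < Im (Z theta) /\
       forall w : C,
         (boundary (image_set Psq (poincare_nbhd (-1) 1 theta)) w /\
          boundary (poincare_nbhd (- K) 1 theta) w) <->
         (w = Z theta \/ w = Cconj (Z theta) \/ w = RtoC 1)) /\
    (forall eps, 0 < eps -> exists delta, 0 < delta /\
       forall theta, 0 < theta < Rmin delta theta0 ->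
         Cmod (Cminus (Z theta) (RtoC (K ^ 2))) < eps) /\
    (forall eps, 0 < eps -> exists delta, 0 < delta /\
       forall theta, 0 < theta < delta ->
         (forall w, DeltaKT K theta w ->
            exists x, 1 <= x <= K ^ 2 /\ Cmod (Cminus w (RtoC x)) < eps) /\
         (forall x, 1 <= x <= K ^ 2 ->
            exists w, DeltaKT K theta w /\ Cmod (Cminus w (RtoC x)) < eps)).
Proof.
  assert (Hth0 : 0 < / (4 * K)) by (apply Rinv_0_lt_compat; lra).
  exists (/ (4 * K)). split; [exact Hth0|].
  exists (fun th => Zt K (cot th)).
  split; [|split].
  - intros th Hth. destruct (th_facts K th HK Hth) as [Ht [Hpi Hi]].
    set (t := cot th) in *.
    split; [apply ImZ_pos; auto|].
    intro w. split.
    + intros [B1 B2].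
      assert (E1 := bnd_zero (Phi1 t) _ w (fun u => img_iff th u Hpi) (cont_Phi1 t w) B1).
      assert (E2 := bnd_zero (Phi2 K t) _ w (fun u => D2_iff K th u HK Hpi) (cont_Phi2 K t w) B2).
      destruct (sqrt_ex w) as [[p q] Hw]. rewrite <- Hw in E1, E2 |- *.
      destruct (classify K t HK Ht p q E1 E2) as [h|[h|h]]; rewrite h; auto.
    + assert (Hy := yZ_pos K t HK Ht). assert (Hyt := yZ_lt_t K t HK Ht).
      assert (Hs := sZ_bounds K t HK Ht). assert (Hp1 := Phi1_Z K t HK Ht).
      assert (HI := ImZ_pos K t HK Ht). assert (HI2 := ImZ_small K t HK Ht).
      assert (HP2 := Phi2_Z K t HK Ht).
      rewrite (surjective_pairing (Zt K t)) in HP2.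
      assert (Ht0 : 0 < t) by lra.
      intros [h|[h|h]]; subst w; split.
      * apply (boundary_ext _ _ _ (fun u => img_iff th u Hpi)).
        replace (Zt K t) with (Psq (sZ K t, 1 * yZ K t)) by (unfold Zt; f_equal; f_equal; ring).
        apply bnd_P1_Z; auto; try lra. apply Rabs_R1.
      * apply (boundary_ext _ _ _ (fun u => D2_iff K th u HK Hpi)).
        rewrite (surjective_pairing (Zt K t)). replace (snd (Zt K t)) with (1 * snd (Zt K t)) at 1 by ring.
        apply bnd_P2_Z; auto. apply Rabs_R1.
      * apply (boundary_ext _ _ _ (fun u => img_iff th u Hpi)).
        replace (Cconj (Zt K t)) with (Psq (sZ K t, -1 * yZ K t))
          by (unfold Zt, Cconj; rewrite !Psq_pair; simpl; f_equal; ring).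
        apply bnd_P1_Z; auto; try lra. rewrite Rabs_left by lra; ring.
      * apply (boundary_ext _ _ _ (fun u => D2_iff K th u HK Hpi)).
        replace (Cconj (Zt K t)) with (fst (Zt K t), -1 * snd (Zt K t))
          by (unfold Cconj; f_equal; ring).
        apply bnd_P2_Z; auto. rewrite Rabs_left by lra; ring.
      * apply (boundary_ext _ _ _ (fun u => img_iff th u Hpi)). apply bnd_P1_one; exact Ht0.
      * apply (boundary_ext _ _ _ (fun u => D2_iff K th u HK Hpi)). apply bnd_P2_one; [exact HK | exact Ht0].
  - intros eps Heps.
    assert (HCK : 0 < CK K) by (unfold CK; assert (0 < K ^ 2 - 1) by nra;
      assert (0 < K * (K - 1) * (K ^ 2 - 1)) by (apply Rmult_lt_0_compat; [apply Rmult_lt_0_compat|]; lra);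
      assert (0 < K ^ 3) by (apply pow_lt; lra); lra).
    exists (eps / (2 * CK K + 1)). split; [apply Rdiv_lt_0_compat; lra|].
    intros th Hth.
    assert (Hth1 : th < eps / (2 * CK K + 1)) by (pose proof (Rmin_l (eps / (2 * CK K + 1)) (/ (4 * K))); lra).
    assert (Hth2 : th < / (4 * K)) by (pose proof (Rmin_r (eps / (2 * CK K + 1)) (/ (4 * K))); lra).
    destruct (th_facts K th HK ltac:(lra)) as [Ht [Hpi Hi]].
    set (t := cot th) in *.
    eapply Rle_lt_trans; [apply (Zt_close K t HK Ht)|].
    assert (CK K / t <= 2 * th * CK K).
    { apply (Rmult_le_reg_r t); [lra|]. replace (CK K / t * t) with (CK K) by (field; lra). nra. }
    assert (th * (2 * CK K + 1) < eps).
    { apply (Rmult_lt_compat_r (2 * CK K + 1)) in Hth1; [|lra].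
      replace (eps / (2 * CK K + 1) * (2 * CK K + 1)) with eps in Hth1 by (field; lra). lra. }
    nra.
  - intros eps Heps.
    assert (HK2 : 1 < K ^ 2) by nra.
    assert (HK4 : 0 < K ^ 4) by (apply pow_lt; lra).
    destruct (small_pos ((K - 1) / 2) 1 (eps / (3 * (2 * K + 1))) 1) as [a [Ha [Ha1 [Ha2 [Ha3 _]]]]];
      try lra; try (apply Rdiv_lt_0_compat; lra).
    set (c := (2 * K ^ 2 + K + 1) * K ^ 4).
    assert (Hc : 0 < c) by (unfold c; apply Rmult_lt_0_compat; nra).
    destruct (small_pos6 (/ (4 * K)) (/ K ^ 2) a (a ^ 2 / c) (eps / (3 * (1 + 2 * K) * K ^ 2))
                (eps / ((2 + 2 * K) * K ^ 2)))
      as [d [Hd [Hd1 [Hd2 [Hd3 [Hd4 [Hd5 Hd6]]]]]]];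
      try (apply Rinv_0_lt_compat; nra); try (apply Rdiv_lt_0_compat; nra); try lra.
    exists d. split; [lra|]. intros th Hth.
    destruct (th_facts K th HK ltac:(lra)) as [Ht [Hpi Hi]].
    set (t := cot th) in *.
    set (y0 := K ^ 2 * th).
    assert (Ht0 : 0 < t) by lra.
    assert (Hy0 : K ^ 2 <= 2 * t * y0) by (unfold y0; nra).
    assert (Hy0p : 0 < y0) by (unfold y0; nra).
    assert (Hy01 : y0 < 1).
    { unfold y0. assert (th < / K ^ 2) by lra.
      apply (Rmult_lt_compat_l (K ^ 2)) in H; [|lra]. rewrite Rinv_r in H by lra. lra. }
    assert (Hy0e : (2 + 2 * K) * y0 < eps).
    { unfold y0. assert (th < eps / ((2 + 2 * K) * K ^ 2)) by lra.
      apply (Rmult_lt_compat_l ((2 + 2 * K) * K ^ 2)) in H; [|nra].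
      replace ((2 + 2 * K) * K ^ 2 * (eps / ((2 + 2 * K) * K ^ 2))) with eps in H by (field; nra). nra. }
    assert (Hy0e3 : (1 + 2 * K) * y0 < eps / 3).
    { unfold y0. assert (th < eps / (3 * (1 + 2 * K) * K ^ 2)) by lra.
      apply (Rmult_lt_compat_l ((1 + 2 * K) * K ^ 2)) in H; [|nra].
      replace ((1 + 2 * K) * K ^ 2 * (eps / (3 * (1 + 2 * K) * K ^ 2))) with (eps / 3) in H by (field; nra). nra. }
    assert (Hae : (2 * K + 1) * a <= eps / 3).
    { apply (Rmult_le_compat_l (2 * K + 1)) in Ha3; [|lra].
      replace ((2 * K + 1) * (eps / (3 * (2 * K + 1)))) with (eps / 3) in Ha3 by (field; lra). lra. }
    assert (Hsm : (2 * K ^ 2 + K + 1) * y0 ^ 2 < 2 * a ^ 3).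
    { assert (E : (2 * K ^ 2 + K + 1) * y0 ^ 2 = th * (c * th)) by (unfold y0, c; ring).
      rewrite E.
      assert (c * th < a ^ 2).
      { assert (th < a ^ 2 / c) by lra. apply (Rmult_lt_compat_l c) in H; [|lra].
        replace (c * (a ^ 2 / c)) with (a ^ 2) in H by (field; lra). lra. }
      assert (th < a) by lra.
      assert (0 < c * th) by nra.
      assert (th * (c * th) < a * a ^ 2) by (apply Rmult_le_0_lt_compat; lra).
      assert (0 < a ^ 3) by (apply pow_lt; lra).
      replace (a * a ^ 2) with (a ^ 3) in H2 by ring. lra. }
    split.
    + intros w [Hw1 Hw2].
      rewrite D2_iff in Hw1 by auto. rewrite img_iff in Hw2 by auto.
      destruct (haus_a K t w y0 HK Ht0 Hy0 Hw1 (Rnot_lt_le _ _ Hw2)) as [x [Hx Hxd]].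
      exists x. split; auto. nra.
    + intros x Hx.
      destruct (haus_b K t x a y0 HK Ht0 Hy0 Hx Ha Ha1 Ha2 ltac:(lra) Hsm) as [w [Hw1 [Hw2 Hw3]]].
      exists w. split.
      * split. { rewrite D2_iff by auto. exact Hw1. } { rewrite img_iff by auto. apply Rle_not_lt. exact Hw2. }
      * lra.
Qed.
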